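(* Let $A$ be a commutative ring and $\sigma$ a hereditary torsion theory on $A$-modules. (1) Every submodule of a totally $\sigma$-finitely cogenerated $A$-module is totally $\sigma$-finitely cogenerated. (2) For any $A$-module $M$ and submodule $N\subseteq M$, $M$ is totally $\sigma$-artinian if and only if both $N$ and $M/N$ are totally $\sigma$-artinian. (3) A finite direct sum of totally $\sigma$-artinian $A$-modules is totally $\sigma$-artinian.
   Context: $\mathcal{L}(\sigma)$ is the Gabriel filter of $\sigma$. A module $X$ is totally $\sigma$-torsion if $X\mathfrak{h}=0$ for some $\mathfrak{h}\in\mathcal{L}(\sigma)$. $X$ is totally $\sigma$-finitely cogenerated if for every family $\{X_i\}_{i\in I}$ of submodules with $\bigcap_{i}X_i$ totally $\sigma$-torsion there is a finite $J\subseteq I$ with $\bigcap_{j\in J}X_j$ totally $\sigma$-torsion. $M$ is totally $\sigma$-artinian if for every descending chain of submodules $N_1\supseteq N_2\supseteq\cdots$ there exist $m$ and $\mathfrak{h}\in\mathcal{L}(\sigma)$ with $N_m\mathfrak{h}\subseteq N_s$ for all $s\ge m$. *)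

(* Defs.v *)
From HB Require Import structures.
From mathcomp Require Import all_boot all_order all_algebra.
Set Implicit Arguments. Unset Strict Implicit. Unset Printing Implicit Defensive.
Import GRing.Theory.
Local Open Scope ring_scope.

Definition is_ideal (A : comPzRingType) (I : A -> Prop) : Prop :=
  I 0 /\ (forall x y, I x -> I y -> I (x + y)) /\ (forall r x, I x -> I (r * x)).

Definition colon (A : comPzRingType) (I : A -> Prop) (a : A) : A -> Prop :=
  fun r => I (r * a).

(* Hereditary torsion theories sigma on A-Mod correspond bijectively to
   Gabriel filters L(sigma); only L(sigma) enters the statement. *)
Definition gabriel_filter (A : comPzRingType) (F : (A -> Prop) -> Prop) : Prop :=
  (forall I, F I -> is_ideal I) /\
  F (fun _ => True) /\
  (forall I J, F I -> is_ideal J -> (forall x, I x -> J x) -> F J) /\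
  (forall I J, F I -> F J -> F (fun x => I x /\ J x)) /\
  (forall I a, F I -> F (colon I a)) /\
  (forall I J, is_ideal I -> F J -> (forall a, J a -> F (colon I a)) -> F I).

Definition submod (A : comPzRingType) (M : lmodType A) (X : M -> Prop) : Prop :=
  X 0 /\ (forall (a : A) x y, X x -> X y -> X (a *: x + y)).

Definition subp (T : Type) (X Y : T -> Prop) : Prop := forall x, X x -> Y x.

Definition modprod (A : comPzRingType) (M : lmodType A) (X : M -> Prop)
    (h : A -> Prop) : M -> Prop :=
  fun y => exists n (a : 'I_n -> A) (x : 'I_n -> M),
    (forall i, h (a i) /\ X (x i)) /\ y = \sum_(i < n) a i *: x i.

Definition totally_torsion (A : comPzRingType) (F : (A -> Prop) -> Prop)
    (M : lmodType A) (X : M -> Prop) : Prop :=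
  exists h, F h /\ forall y, modprod X h y -> y = 0.

(* Intersection of a finite subfamily J = {J 0, ..., J (k-1)} of a family of submodules of X
   (the empty intersection being X itself). *)
Definition fin_inter (A : comPzRingType) (M : lmodType A) (X : M -> Prop)
    (I : Type) (Xs : I -> M -> Prop) (k : nat) (J : 'I_k -> I) : M -> Prop :=
  fun y => X y /\ forall j, Xs (J j) y.

Definition totally_fcog (A : comPzRingType) (F : (A -> Prop) -> Prop)
    (M : lmodType A) (X : M -> Prop) : Prop :=
  forall (I : Type) (Xs : I -> M -> Prop),
    (forall i, submod (Xs i) /\ subp (Xs i) X) ->
    totally_torsion F (fun y => X y /\ forall i, Xs i y) ->
    exists (k : nat) (J : 'I_k -> I), totally_torsion F (fin_inter X Xs J).

Definition totally_artinian (A : comPzRingType) (F : (A -> Prop) -> Prop)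
    (M : lmodType A) (X : M -> Prop) : Prop :=
  forall N : nat -> M -> Prop,
    (forall k, submod (N k) /\ subp (N k) X) ->
    (forall k, subp (N k.+1) (N k)) ->
    exists m h, F h /\ forall s, (m <= s)%N -> subp (modprod (N m) h) (N s).

Definition mod_totally_fcog (A : comPzRingType) (F : (A -> Prop) -> Prop)
    (M : lmodType A) : Prop := totally_fcog F (fun _ : M => True).
Definition mod_totally_artinian (A : comPzRingType) (F : (A -> Prop) -> Prop)
    (M : lmodType A) : Prop := totally_artinian F (fun _ : M => True).

(* Main.v *)
Require Import Defs.
From HB Require Import structures.
From mathcomp Require Import all_boot all_order all_algebra.
From Stdlib Require Import Classical ClassicalEpsilon.
Import GRing.Theory.
Local Open Scope ring_scope.
Set Implicit Arguments.

Lemma submod0 (A : comPzRingType) (M : lmodType A) (X : M -> Prop) :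
  submod X -> X 0.
Proof. by case. Qed.
Lemma submodD (A : comPzRingType) (M : lmodType A) (X : M -> Prop) x y :
  submod X -> X x -> X y -> X (x + y).
Proof. by move=> [_ h] hx hy; have := h 1 x y hx hy; rewrite scale1r. Qed.
Lemma submodZ (A : comPzRingType) (M : lmodType A) (X : M -> Prop) a x :
  submod X -> X x -> X (a *: x).
Proof. by move=> [h0 h] hx; have := h a x 0 hx h0; rewrite addr0. Qed.
Lemma submodB (A : comPzRingType) (M : lmodType A) (X : M -> Prop) x y :
  submod X -> X x -> X y -> X (x - y).
Proof.
move=> hX hx hy; apply: submodD => //; rewrite -scaleN1r; exact: submodZ.
Qed.
Lemma submod_sum (A : comPzRingType) (M : lmodType A) (X : M -> Prop) n
  (P : pred 'I_n) (f : 'I_n -> M) :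
  submod X -> (forall i, X (f i)) -> X (\sum_(i < n | P i) f i).
Proof.
move=> hX hf; apply: (big_ind X); [exact: submod0| |by []].
by move=> x y; apply: submodD.
Qed.
Lemma submodI (A : comPzRingType) (M : lmodType A) (X Y : M -> Prop) :
  submod X -> submod Y -> submod (fun x => X x /\ Y x).
Proof.
move=> hX hY; split; first by split; apply: submod0.
move=> a x y [? ?] [? ?]; split; [exact: hX.2|exact: hY.2].
Qed.
Lemma modprod_sub (A : comPzRingType) (M : lmodType A) (X Y : M -> Prop) h :
  submod Y -> (forall a x, h a -> X x -> Y (a *: x)) -> subp (modprod X h) Y.
Proof.
move=> hY H y [n [a [x [hx ->]]]]; apply: submod_sum => // i.
by apply: H; case: (hx i).
Qed.
Lemma modprod1 (A : comPzRingType) (M : lmodType A) (X : M -> Prop) (h : A -> Prop) a x :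
  h a -> X x -> modprod X h (a *: x).
Proof.
move=> ha hx; exists 1%N, (fun _ => a), (fun _ => x); split => //.
by rewrite big_ord1.
Qed.
Arguments modprod1 {A M X h a x}.
Lemma modprod_mono (A : comPzRingType) (M : lmodType A) (X Y : M -> Prop) h :
  subp X Y -> subp (modprod X h) (modprod Y h).
Proof.
move=> hXY y [n [a [x [hx ->]]]]; exists n, a, x; split => // i.
by case: (hx i) => ? ?; split => //; apply: hXY.
Qed.
Lemma chain_le (A : comPzRingType) (M : lmodType A) (N : nat -> M -> Prop) :
  (forall k, subp (N k.+1) (N k)) -> forall i j, (i <= j)%N -> subp (N j) (N i).
Proof.
move=> hd i j /subnKC <-; elim: (j - i)%N => [|d IH]; first by rewrite addn0.
by rewrite addnS => x /hd /IH.
Qed.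

Arguments chain_le {A M N} hd {i j}.
Lemma core (A : comPzRingType) (F : (A -> Prop) -> Prop) (M : lmodType A)
  (N : nat -> M -> Prop) (K : M -> Prop) :
  gabriel_filter F -> (forall k, submod (N k)) -> (forall k, subp (N k.+1) (N k)) ->
  (exists m1 h1, F h1 /\ forall s, (m1 <= s)%N ->
      subp (modprod (fun x => N m1 x /\ K x) h1) (N s)) ->
  (exists m2 h2, F h2 /\ forall s, (m2 <= s)%N -> forall x, N m2 x ->
      forall a, h2 a -> exists n', N s n' /\ K (a *: x - n')) ->
  exists m h, F h /\ forall s, (m <= s)%N -> subp (modprod (N m) h) (N s).
Proof.
move=> [_ [_ [FT3 [_ [_ FT4]]]]] hN hd [m1 [h1 [Fh1 H1]]] [m2 [h2 [Fh2 H2]]].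
pose m := maxn m1 m2.
pose I := fun c : A => forall s, (m <= s)%N -> forall x, N m x -> N s (c *: x).
have Iid : is_ideal I.
  split; [|split].
  - by move=> s _ x _; rewrite scale0r; apply: submod0.
  - move=> c d Ic Id s hs x hx; rewrite scalerDl; apply: submodD => //;
      [exact: Ic| exact: Id].
  - move=> r c Ic s hs x hx; rewrite -scalerA; apply: submodZ => //; exact: Ic.
have FI : F I.
  apply: (FT4 I h2 Iid Fh2) => a ha.
  apply: (FT3 h1) => //.
    case: Iid => [I0 [ID IM]]; split; [|split]; rewrite /colon.
    - by rewrite mul0r.
    - by move=> x y hx hy; rewrite mulrDl; apply: ID.
    - by move=> r x hx; rewrite -mulrA; apply: IM.
  move=> b hb; rewrite /colon /I => s hs x hx.
  have xm2 : N m2 x := chain_le hd (leq_maxr m1 m2) _ hx.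
  have [n' [hn' hK]] := H2 s (leq_trans (leq_maxr _ _) hs) x xm2 a ha.
  have zm : N m (a *: x - n').
    by apply: submodB => //; [apply: submodZ | apply: (chain_le hd hs)].
  have bz : N s (b *: (a *: x - n')).
    apply: (H1 s (leq_trans (leq_maxl _ _) hs)); apply: modprod1 => //=.
    by split; [exact: (chain_le hd (leq_maxl m1 m2) _ zm)|].
  have -> : (b * a) *: x = b *: (a *: x - n') + b *: n'
    by rewrite scalerBr subrK scalerA.
  by apply: submodD => //; apply: submodZ.
exists m, I; split => // s hs; apply: modprod_sub => // c x Ic hx; exact: Ic s hs x hx.
Qed.

Lemma art_sub (A : comPzRingType) (F : (A -> Prop) -> Prop) (M : lmodType A)
  (X Y : M -> Prop) : subp X Y -> totally_artinian F Y -> totally_artinian F X.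
Proof.
move=> hXY hY N hN hd; apply: hY => // k; split; first by case: (hN k).
by move=> x /(proj2 (hN k)) /hXY.
Qed.

Lemma art_img (A : comPzRingType) (F : (A -> Prop) -> Prop) (M P : lmodType A)
  (f : {linear M -> P}) :
  mod_totally_artinian F M -> totally_artinian F (fun p => exists x, f x = p).
Proof.
move=> hM Q hQ hd.
have h1 : forall k, submod (fun x => Q k (f x)) /\ subp (fun x => Q k (f x)) (fun _ => True).
  move=> k; split => //; split.
    by rewrite linear0; apply: submod0; case: (hQ k).
  by move=> a x y hx hy; rewrite linearP; apply: (proj1 (hQ k)).2.
have h2 : forall k, subp (fun x => Q k.+1 (f x)) (fun x => Q k (f x)).
  by move=> k x; apply: hd.
have [m [h [Fh H]]] := hM (fun k x => Q k (f x)) h1 h2.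
exists m, h; split => // s hs y [n [a [q [hq ->]]]].
pose x := fun i => proj1_sig (constructive_indefinite_description _
   ((proj2 (hQ m)) _ (proj2 (hq i)))).
have fx : forall i, f (x i) = q i.
  by move=> i; rewrite /x; case: constructive_indefinite_description.
have e : f (\sum_(i < n) a i *: x i) = \sum_(i < n) a i *: q i.
  by rewrite linear_sum; apply: eq_bigr => i _; rewrite linearZ fx.
rewrite -e; apply: (H s hs); exists n, a, x; split => // i; split; first by case: (hq i).
by rewrite fx; case: (hq i).
Qed.

Lemma art_zero (A : comPzRingType) (F : (A -> Prop) -> Prop) (P : lmodType A) :
  gabriel_filter F -> totally_artinian F (fun p : P => p = 0).
Proof.
move=> [_ [FT _]] N hN hd; exists 0%N, (fun _ => True); split => // s _ y.
move=> [n [a [x [hx ->]]]]; rewrite big1; first by apply: submod0; case: (hN s).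
move=> i _; have -> : x i = 0 by apply: (proj2 (hN 0%N)); case: (hx i).
by rewrite scaler0.
Qed.

Lemma art_ker (A : comPzRingType) (F : (A -> Prop) -> Prop) (M P : lmodType A)
  (f : {linear M -> P}) (K : M -> Prop) :
  gabriel_filter F -> submod K -> (forall x, f x = 0 -> K x) ->
  totally_artinian F K -> mod_totally_artinian F P -> mod_totally_artinian F M.
Proof.
move=> hF hK fK artK artP N hN hd.
have hN' : forall k, submod (N k) by move=> k; case: (hN k).
apply: (@core A F M N K hF hN' hd).
- have [m1 [h1 [Fh1 H1]]] := artK (fun k x => N k x /\ K x)
    (fun k => conj (submodI (hN' k) hK) (fun x => @proj2 _ _))
    (fun k x hx => conj (hd k x (proj1 hx)) (proj2 hx)).
  by exists m1, h1; split => // s hs y /(H1 s hs) [].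
- pose Q := (fun k p => exists x, N k x /\ f x = p).
  have q1 : forall k, submod (Q k) /\ subp (Q k) (fun _ => True).
    move=> k; split => //; split.
      by exists 0; rewrite linear0; split => //; apply: submod0.
    move=> a _ _ [x [hx <-]] [y [hy <-]]; exists (a *: x + y); split.
      exact: (proj2 (hN' k)).
    by rewrite linearP.
  have q2 : forall k, subp (Q k.+1) (Q k).
    by move=> k p [x [hx <-]]; exists x; split => //; apply: hd.
  have [m2 [h2 [Fh2 H2]]] := artP Q q1 q2.
  exists m2, h2; split => // s hs x hx a ha.
  have [n' [hn' e]] := H2 s hs _ (modprod1 ha (ex_intro _ x (conj hx erefl))).
  exists n'; split => //; apply: fK.
  by rewrite linearB linearZ e subrr.
Qed.

Lemma art_sum (A : comPzRingType) (F : (A -> Prop) -> Prop) (P : lmodType A)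
  (X Y : P -> Prop) : gabriel_filter F -> submod X -> submod Y ->
  totally_artinian F X -> totally_artinian F Y ->
  totally_artinian F (fun z => exists x y, X x /\ Y y /\ z = x + y).
Proof.
move=> hF hX hY artX artY N hN hd.
have hN' : forall k, submod (N k) by move=> k; case: (hN k).
apply: (@core A F P N X hF hN' hd).
- have [m1 [h1 [Fh1 H1]]] := artX (fun k x => N k x /\ X x)
    (fun k => conj (submodI (hN' k) hX) (fun x => @proj2 _ _))
    (fun k x hx => conj (hd k x (proj1 hx)) (proj2 hx)).
  by exists m1, h1; split => // s hs y /(H1 s hs) [].
- pose B := (fun k y => Y y /\ exists n x, N k n /\ X x /\ n = x + y).
  have q1 : forall k, submod (B k) /\ subp (B k) Y.
    move=> k; split; last by move=> y [].
    split.
      split; first exact: submod0.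
      by exists 0, 0; rewrite addr0; split; [apply: submod0|split => //; apply: submod0].
    move=> a y y' [hy [n [x [hn [hx e]]]]] [hy' [n' [x' [hn' [hx' e']]]]].
    split; first exact: (proj2 hY).
    exists (a *: n + n'), (a *: x + x'); split; first exact: (proj2 (hN' k)).
    split; first exact: (proj2 hX).
    by rewrite e e' scalerDr addrACA.
  have q2 : forall k, subp (B k.+1) (B k).
    move=> k y [hy [n [x [hn [hx e]]]]]; split => //; exists n, x; split => //.
    exact: hd.
  have [m2 [h2 [Fh2 H2]]] := artY B q1 q2.
  exists m2, h2; split => // s hs x hx a ha.
  have [x1 [y1 [hx1 [hy1 ex]]]] := proj2 (hN m2) x hx.
  have hB : (fun y => Y y /\ exists n x, N m2 n /\ X x /\ n = x + y) y1.
    by split => //; exists x, x1.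
  have [_ [n' [x' [hn' [hx' e']]]]] := H2 s hs _ (modprod1 ha hB).
  exists n'; split => //; rewrite ex e' scalerDr.
  have -> : a *: x1 + a *: y1 - (x' + a *: y1) = a *: x1 - x'
    by rewrite opprD addrACA subrr addr0.
  by apply: submodB => //; apply: submodZ.
Qed.

Lemma torsion_sub (A : comPzRingType) (F : (A -> Prop) -> Prop) (M : lmodType A)
  (X Y : M -> Prop) : subp X Y -> totally_torsion F Y -> totally_torsion F X.
Proof.
move=> hXY [h [Fh H]]; exists h; split => // y /(modprod_mono hXY); exact: H.
Qed.

Lemma part1 (A : comPzRingType) (F : (A -> Prop) -> Prop) (M : lmodType A)
  (N : M -> Prop) : mod_totally_fcog F M -> submod N -> totally_fcog F N.
Proof.
move=> hM hN I Xs hXs ht.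
case: (classic (exists i : I, True)) => [[i0 _]|nI].
  have ht' : totally_torsion F (fun y : M => True /\ forall i, Xs i y).
    apply: (torsion_sub _ ht) => y [_ H]; split => //.
    exact: (proj2 (hXs i0)) _ (H i0).
  have [k [J HJ]] := hM I Xs (fun i => conj (proj1 (hXs i)) (fun _ _ => Logic.I)) ht'.
  exists k, J; apply: (torsion_sub _ HJ) => y [_ H]; split => //.
unshelve eexists 0%N, _; first by case=> m; rewrite ltn0.
apply: (torsion_sub _ ht) => y [hy _]; split => // i.
by exfalso; apply: nI; exists i.
Qed.

Lemma part3 (A : comPzRingType) (F : (A -> Prop) -> Prop) (hF : gabriel_filter F)
  (n : nat) (Ms : 'I_n -> lmodType A) (P : lmodType A)
  (iota : forall i, {linear Ms i -> P}) :
  (forall p : P, exists x : forall i, Ms i, p = \sum_(i < n) iota i (x i)) ->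
  (forall i, mod_totally_artinian F (Ms i)) ->
  mod_totally_artinian F P.
Proof.
move=> hsurj hart.
pose Im := fun i (p : P) => exists y, iota i y = p.
have ImS : forall i, submod (Im i).
  move=> i; split; first by exists 0; rewrite linear0.
  by move=> a _ _ [x <-] [y <-]; exists (a *: x + y); rewrite linearP.
have ImA : forall i, totally_artinian F (Im i) by move=> i; apply: art_img.
pose U := fun (Pr : pred 'I_n) (p : P) =>
  exists q : 'I_n -> P, (forall i, Im i (q i)) /\ p = \sum_(i < n | Pr i) q i.
have US : forall Pr, submod (U Pr).
  move=> Pr; split.
    exists (fun _ => 0); split; first by move=> i; apply: submod0.
    by rewrite big1.
  move=> a _ _ [q [hq ->]] [q' [hq' ->]].
  exists (fun i => a *: q i + q' i); split.
    by move=> i; apply: (proj2 (ImS i)).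
  by rewrite big_split /= scaler_sumr.
have UA : forall k, totally_artinian F (U (fun i => (i < k)%N)).
  elim=> [|k IH].
    apply: (art_sub _ (@art_zero A F P hF)) => p [q [_ ->]].
    by rewrite big_pred0 // => i; rewrite ltn0.
  case: (ltnP k n) => hk.
    pose o := Ordinal hk.
    apply: (art_sub _ (art_sum hF (US _) (ImS o) IH (ImA o))).
    move=> p [q [hq ->]].
    exists (\sum_(i < n | (i < k)%N) q i), (q o); split; first by exists q.
    split => //.
    rewrite (bigD1 o) /=; last by rewrite ltnSn.
    rewrite addrC; congr (_ + _); apply: eq_bigl => i.
    rewrite -val_eqE /= ltnS; case: ltngtP => //.
  apply: (art_sub _ IH) => p [q [hq ->]]; exists q; split => //.
  apply: eq_bigl => i; rewrite !(leq_trans (ltn_ord i)) //.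
  exact: leqW.
apply: (art_sub _ (UA n)) => p _.
have [x ->] := hsurj p; exists (fun i => iota i (x i)); split.
  by move=> i; exists (x i).
by apply: eq_bigl => i; rewrite ltn_ord.
Qed.

Theorem mainTheorem5 (A : comPzRingType) (F : (A -> Prop) -> Prop)
  (hF : gabriel_filter F) :
  (* (1) submodules of totally sigma-f.cog. modules *)
  (forall (M : lmodType A) (N : M -> Prop),
     mod_totally_fcog F M -> submod N -> totally_fcog F N) /\
  (* (2) M artinian iff N and M/N artinian; M/N is presented by any
         surjective linear map pi : M -> P with kernel N *)
  (forall (M : lmodType A) (N : M -> Prop) (P : lmodType A)
          (pi : {linear M -> P}),
     submod N -> (forall p : P, exists x, pi x = p) ->
     (forall x, pi x = 0 <-> N x) ->
     (mod_totally_artinian F M <->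
      totally_artinian F N /\ mod_totally_artinian F P)) /\
  (* (3) finite direct sums: P = M_0 (+) ... (+) M_(n-1) via injections iota *)
  (forall (n : nat) (Ms : 'I_n -> lmodType A) (P : lmodType A)
          (iota : forall i, {linear Ms i -> P}),
     (forall p : P, exists x : forall i, Ms i, p = \sum_(i < n) iota i (x i)) ->
     (forall x y : forall i, Ms i,
        \sum_(i < n) iota i (x i) = \sum_(i < n) iota i (y i) -> forall i, x i = y i) ->
     (forall i, mod_totally_artinian F (Ms i)) ->
     mod_totally_artinian F P).
Proof.
split; first exact: part1.
split.
  move=> M N P pi hN hsurj hker; split.
    move=> hM; split; first by apply: (art_sub _ hM).
    apply: (art_sub _ (art_img pi hM)) => p _; exact: hsurj.
  by move=> [hNa hPa]; apply: (@art_ker A F M P pi N hF hN _ hNa hPa) => x /hker.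
move=> n Ms P iota hs _ ha; exact: (@part3 A F hF n Ms P iota hs ha).
Qed.
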